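(* Let $a<b$ be real, $Z\subseteq\mathbb{R}^n\times\mathbb{R}^m$ permutation-invariant with respect to $x$, and $\mathcal{F}=\{F_1,\dots,F_r\}$ a permutation-invariant collection of faces of $[a,b]^n$. Let $I=\{i\in\{1,\dots,r\}\mid$ there exist integers $0\le p<q\le n+1$ with $u(F_i)=\{1,\dots,p\}$ and $l(F_i)=\{q,\dots,n\}\}$ (where $\{1,\dots,0\}$ and $\{n+1,\dots,n\}$ denote the empty set). Then $$\mathrm{conv}(X(Z,a,b,\mathcal{F}))=\Big\{(x,z)\ \Big|\ \exists u:\ (u,z)\in\mathrm{conv}\Big(\bigcup_{i\in I}X(Z,a,b,\{F_i\})\Big),\ u_1\ge\dots\ge u_n,\ u\ge_m x\Big\}.$$
   Context: $Z$ is permutation-invariant with respect to $x$ if $(x,z)\in Z$ implies $(Qx,z)\in Z$ for every permutation matrix $Q$. For a collection $\mathcal{F}'=\{F'_1,\dots,F'_s\}$ of faces of $[a,b]^n$, $X(Z,a,b,\mathcal{F}')=\{(x,z)\in[a,b]^n\times\mathbb{R}^m\mid(x,z)\in Z,\ x\in\bigcup_{i=1}^s F'_i\}$. For a face $F$ of $[a,b]^n$, $l(F)=\{j\mid\hat x_j=a\ \forall\hat x\in F\}$ and $u(F)=\{j\mid\hat x_j=b\ \forall\hat x\in F\}$. A collection of faces is permutation-invariant if, for each face $F$ in it and each permutation matrix $Q$, the face $\{Qx\mid x\in F\}$ is also in it. $x\ge_m y$ means $\sum_{i=1}^j x_{[i]}\ge\sum_{i=1}^j y_{[i]}$ for $j<n$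 with equality for $j=n$ ($x_{[i]}$ the $i$-th largest entry). *)

(* Defs.v *)
From HB Require Import structures.
From mathcomp Require Import all_boot all_order all_algebra all_fingroup.
Set Implicit Arguments. Unset Strict Implicit. Unset Printing Implicit Defensive.
Import Order.TTheory GRing.Theory Num.Theory.
Local Open Scope ring_scope.

Section Defs.
Variable R : realFieldType.

Definition conv (V : lmodType R) (S : V -> Prop) : V -> Prop :=
  fun y => exists (k : nat) (lam : 'I_k -> R) (pts : 'I_k -> V),
    [/\ forall i, 0 <= lam i,
        \sum_(i < k) lam i = 1,
        forall i, S (pts i) &
        y = \sum_(i < k) lam i *: pts i].

Definition box (n : nat) (a b : R) : 'cV[R]_n -> Prop :=
  fun x => forall j : 'I_n, a <= x j 0 <= b.

(* F is a face of the polytope [a,b]^n: the intersection of the box with a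
   hyperplane c^T x = d such that c^T x <= d is valid on the box
   (this includes the empty face and the whole box). *)
Definition is_face (n : nat) (a b : R) (F : 'cV[R]_n -> Prop) : Prop :=
  exists (c : 'cV[R]_n) (d : R),
    (forall x, box a b x -> (c^T *m x) 0 0 <= d) /\
    (forall x, F x <-> (box a b x /\ (c^T *m x) 0 0 = d)).

Definition perm_inv_Z (n m : nat) (Z : 'cV[R]_n * 'cV[R]_m -> Prop) : Prop :=
  forall (x : 'cV[R]_n) (z : 'cV[R]_m) (Q : 'M[R]_n),
    is_perm_mx Q -> Z (x, z) -> Z (Q *m x, z).

Definition perm_inv_faces (n r : nat) (Fs : 'I_r -> ('cV[R]_n -> Prop)) : Prop :=
  forall (i : 'I_r) (Q : 'M[R]_n), is_perm_mx Q ->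
    exists j : 'I_r, forall y, Fs j y <-> exists x, Fs i x /\ y = Q *m x.

Definition Xset (n m s : nat) (Z : 'cV[R]_n * 'cV[R]_m -> Prop) (a b : R)
    (Fs : 'I_s -> ('cV[R]_n -> Prop)) : 'cV[R]_n * 'cV[R]_m -> Prop :=
  fun p => [/\ box a b p.1, Z p & exists i : 'I_s, Fs i p.1].

Definition lset (n : nat) (a : R) (F : 'cV[R]_n -> Prop) (j : 'I_n) : Prop :=
  forall x, F x -> x j 0 = a.
Definition uset (n : nat) (b : R) (F : 'cV[R]_n -> Prop) (j : 'I_n) : Prop :=
  forall x, F x -> x j 0 = b.

(* The index condition defining I: there are integers 0 <= p < q <= n+1 with
   u(F) = {1..p} and l(F) = {q..n} (1-based coordinates; coordinate j : 'I_n
   is the (j+1)-th). *)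
Definition in_I (n : nat) (a b : R) (F : 'cV[R]_n -> Prop) : Prop :=
  exists p q : nat, (p < q)%N /\ (q <= n.+1)%N /\
    (forall j : 'I_n, uset b F j <-> (j.+1 <= p)%N) /\
    (forall j : 'I_n, lset a F j <-> (q <= j.+1)%N).

Definition sorted_desc (n : nat) (x : 'cV[R]_n) : seq R :=
  sort (fun s t : R => t <= s) [seq x i 0 | i <- enum 'I_n].

Definition topsum (n : nat) (x : 'cV[R]_n) (j : nat) : R :=
  \sum_(i < j) nth 0 (sorted_desc x) i.

Definition majorizes (n : nat) (x y : 'cV[R]_n) : Prop :=
  (forall j : nat, (j < n)%N -> topsum y j <= topsum x j) /\
  topsum x n = topsum y n.

Definition nonincreasing_vec (n : nat) (u : 'cV[R]_n) : Prop :=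
  forall i j : 'I_n, (i <= j)%N -> u j 0 <= u i 0.

End Defs.

(* Main.v *)
Require Import Defs.
From HB Require Import structures.
From mathcomp Require Import all_boot all_order all_algebra all_fingroup.
From Stdlib Require Import ClassicalEpsilon Classical.
From mathcomp Require Import ring lra zify.
Set Implicit Arguments. Unset Strict Implicit. Unset Printing Implicit Defensive.
Import Order.TTheory GRing.Theory Num.Theory.
Local Open Scope ring_scope.

Section Conv.
Variable R : realFieldType.
Variable V : lmodType R.
Implicit Types S T : V -> Prop.

Lemma conv_fin (I : finType) S (lam : I -> R) (p : I -> V) :
  (forall i, 0 <= lam i) -> \sum_i lam i = 1 -> (forall i, S (p i)) ->
  conv S (\sum_i lam i *: p i).
Proof.
move=> h0 h1 hS.
exists #|@predT I|, (fun j => lam (enum_val j)), (fun j => p (enum_val j)).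
split=> //.
- by rewrite -h1 -(big_enum_val (A:=predT)).
- by rewrite -(big_enum_val (A:=predT) (fun i => lam i *: p i)).
Qed.

Lemma conv1 S y : S y -> conv S y.
Proof.
move=> hy; exists 1%N, (fun _ => 1), (fun _ => y); split=> //.
- by rewrite big_ord1.
- by rewrite big_ord1 scale1r.
Qed.

Lemma conv2 S p q t : S p -> S q -> 0 <= t -> t <= 1 ->
  conv S (t *: p + (1 - t) *: q).
Proof.
move=> hp hq t0 t1.
have := @conv_fin bool S (fun b => if b then t else 1 - t) (fun b => if b then p else q).
rewrite !big_bool /=; apply => //.
- by case => //; rewrite subr_ge0.
- by rewrite addrC subrK.
- by case.
Qed.

Lemma conv_mono S T y : (forall v, S v -> T v) -> conv S y -> conv T y.
Proof.
move=> hST [k [lam [p [h0 h1 hS ->]]]].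
by exists k, lam, p; split=> // i; apply: hST.
Qed.

Lemma conv_lin (W : lmodType R) (f : V -> W) S (T : W -> Prop) y :
  (forall p q, f (p + q) = f p + f q) -> (forall c p, f (c *: p) = c *: f p) ->
  (forall v, S v -> T (f v)) -> conv S y -> conv T (f y).
Proof.
move=> fD fZ hST [k [lam [p [h0 h1 hS ->]]]].
have f0 : f 0 = 0.
  have := fD 0 0; rewrite addr0 => h.
  by apply: (addrI (f 0)); rewrite addr0 -h.
exists k, lam, (fun i => f (p i)); split=> //.
- by move=> i; apply: hST.
- rewrite (big_morph f fD f0); apply: eq_bigr => i _; exact: fZ.
Qed.

Lemma conv_sig S y : conv S y ->
  {k : nat & {lam : 'I_k -> R & {p : 'I_k -> V |
    [/\ forall i, 0 <= lam i, \sum_(i < k) lam i = 1, forall i, S (p i) &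
        y = \sum_(i < k) lam i *: p i]}}}.
Proof.
move=> h.
have [k hk] := constructive_indefinite_description _ h.
have [lam hl] := constructive_indefinite_description _ hk.
have [p hp] := constructive_indefinite_description _ hl.
by exists k, lam, p.
Qed.

Lemma conv_conv S y : conv (conv S) y -> conv S y.
Proof.
move=> [K [lam [p [h0 h1 hS ->]]]].
pose c i := conv_sig (hS i).
pose k i := projT1 (c i).
pose mu i : 'I_(k i) -> R := projT1 (projT2 (c i)).
pose q i : 'I_(k i) -> V := proj1_sig (projT2 (projT2 (c i))).
have hc i : [/\ forall j, 0 <= mu i j, \sum_(j < k i) mu i j = 1,
      forall j, S (q i j) & p i = \sum_(j < k i) mu i j *: q i j].
  exact: (proj2_sig (projT2 (projT2 (c i)))).
have -> : \sum_(i < K) lam i *: p i =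
   \sum_(i < K) \sum_(j < k i) (lam i * mu i j) *: q i j.
  apply: eq_bigr => i _; have [_ _ _ ->] := hc i.
  by rewrite scaler_sumr; apply: eq_bigr => j _; rewrite scalerA.
rewrite (sig_big_dep (J := fun i => ordinal (k i)) xpredT (fun _ => xpredT)
   (fun i j => (lam i * mu i j) *: q i j)) /=.
have := (@conv_fin {i : 'I_K & 'I_(k i)} S (fun pp => lam (tag pp) * mu (tag pp) (tagged pp))
                 (fun pp => q (tag pp) (tagged pp))).
apply.
- by move=> [i j] /=; have [hm _ _ _] := hc i; rewrite mulr_ge0.
- rewrite -(sig_big_dep (J := fun i => ordinal (k i)) xpredT (fun _ => xpredT)
     (fun i j => lam i * mu i j)) /=.
  rewrite -h1; apply: eq_bigr => i _.
  by rewrite -mulr_sumr; have [_ -> _ _] := hc i; rewrite mulr1.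
- by move=> [i j] /=; have [_ _ hq _] := hc i; apply: hq.
Qed.

End Conv.
Section Vec.
Variable R : realFieldType.
Variable n : nat.

Definition pv (s : 'S_n) (v : 'cV[R]_n) : 'cV[R]_n := perm_mx s *m v.

Lemma pvE s v i : pv s v i 0 = v (s i) 0.
Proof. by rewrite /pv -row_permE mxE. Qed.

Lemma pvD s v w : pv s (v + w) = pv s v + pv s w.
Proof. by rewrite /pv mulmxDr. Qed.

Lemma pvZ s c v : pv s (c *: v) = c *: pv s v.
Proof. by rewrite /pv scalemxAr. Qed.

Lemma pvM s t v : pv s (pv t v) = pv (s * t)%g v.
Proof. by apply/matrixP => i j; rewrite !ord1 !pvE permM. Qed.

Lemma pv1 v : pv 1%g v = v.
Proof. by apply/matrixP => i j; rewrite !ord1 pvE perm1. Qed.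

Lemma sort_perm (key : 'I_n -> R) :
  exists s : 'S_n, forall i j : 'I_n, (i <= j)%N -> key (s j) <= key (s i).
Proof.
pose leT := fun i j : 'I_n => key j <= key i.
pose l := sort leT (enum 'I_n).
have sz : size l = n by rewrite size_sort size_enum_ord.
have ul : uniq l by rewrite sort_uniq enum_uniq.
pose f := fun i : 'I_n => nth i l i.
have finj : injective f.
  move=> i j; rewrite /f (set_nth_default i j) ?sz // => /eqP.
  by rewrite nth_uniq ?sz // => /eqP /val_inj.
exists (perm finj) => i j hij; rewrite !permE /f (set_nth_default i j) ?sz //.
have tr : transitive leT by move=> u v w h1 h2; rewrite /leT (le_trans h2 h1).
have rf : reflexive leT by move=> u; rewrite /leT.
have to : total leT by move=> u v; rewrite /leT le_total.
apply: (sorted_leq_nth tr rf i (sort_sorted to _)) => //; rewrite inE sz //.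
Qed.

Lemma topsum_sorted (x : 'cV[R]_n) (s : 'S_n) :
  (forall i j : 'I_n, (i <= j)%N -> x (s j) 0 <= x (s i) 0) ->
  forall m, (m <= n)%N -> topsum x m = \sum_(i < n | (i < m)%N) x (s i) 0.
Proof.
move=> hs m hm.
pose L := [seq x (s i) 0 | i <- enum 'I_n].
have sL : sorted_desc x = L.
  rewrite /sorted_desc.
  have pe : perm_eq [seq x i 0 | i <- enum 'I_n] L.
    have -> : L = map (fun i => x i 0) (map s (enum 'I_n)) by rewrite /L; elim: (enum 'I_n) => //= h t ->.
    apply: perm_map.
    apply: uniq_perm; first exact: enum_uniq.
      by rewrite map_inj_uniq ?enum_uniq //; apply: perm_inj.
    move=> i; rewrite mem_enum; symmetry.
    by apply/mapP; exists (s^-1 i)%g; rewrite ?mem_enum ?permKV.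
  have to : total (fun s0 t : R => t <= s0) by move=> u v; rewrite le_total.
  have tr : transitive (fun s0 t : R => t <= s0).
    by move=> u v w h1 h2; rewrite (le_trans h2 h1).
  have an : antisymmetric (fun s0 t : R => t <= s0).
    by move=> u v /andP[h1 h2]; apply/le_anti; rewrite h1 h2.
  rewrite (perm_sortP to tr an _ _ pe) sorted_sort //.
  apply/(sortedP 0) => i; rewrite size_map size_enum_ord => hi.
  have hi' : (i < n)%N by apply: ltnW.
  pose oi := Ordinal hi'; pose oj := Ordinal hi.
  have e1 : nth 0 L i = x (s oi) 0.
    rewrite /L (nth_map oi) ?size_enum_ord //; congr (x (s _) 0).
    by apply: val_inj; rewrite /= nth_enum_ord.
  have e2 : nth 0 L i.+1 = x (s oj) 0.
    rewrite /L (nth_map oi) ?size_enum_ord //; congr (x (s _) 0).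
    by apply: val_inj; rewrite /= nth_enum_ord.
  by rewrite e1 e2; apply: hs; rewrite /= leqnSn.
rewrite /topsum sL (big_ord_widen n (fun i => nth 0 L i) hm).
apply: eq_bigr => i _; rewrite /L (nth_map i) ?size_enum_ord //.
by rewrite nth_ord_enum.
Qed.


Lemma sum_split_le (f : 'I_n -> R) (A B : pred 'I_n) :
  (forall i, A i && ~~ B i -> f i <= 0) -> (forall i, B i && ~~ A i -> 0 <= f i) ->
  \sum_(i | A i) f i <= \sum_(i | B i) f i.
Proof.
move=> hA hB.
rewrite (bigID B) [X in _ <= X](bigID A) /=.
rewrite (eq_bigl (fun i => B i && A i)) => [|i]; last by rewrite andbC.
apply: lerD => //.
apply: (@le_trans _ _ 0).
  by apply: (le_trans (ler_sum _ hA)); rewrite big1_eq.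
by apply: sumr_ge0.
Qed.

Lemma core (y : 'I_n -> R) (P : pred 'I_n) j :
  (forall i k : 'I_n, (i <= k)%N -> y k <= y i) -> (j <= n)%N ->
  \sum_(i | P i) (1:R) = \sum_(i < n | (i < j)%N) 1 ->
  \sum_(i | P i) y i <= \sum_(i < n | (i < j)%N) y i.
Proof.
move=> hy hj h1.
have [t ht] : exists t, forall i : 'I_n, if (i < j)%N then t <= y i else y i <= t.
  case: j hj {h1} => [|j] hj.
    exists (\sum_i `|y i|) => i /=.
    rewrite (le_trans (ler_norm _)) // (bigD1 i) //= lerDl sumr_ge0 //.
  exists (y (Ordinal hj)) => i; case: ifP => hi; apply: hy => /=.
    by rewrite -ltnS.
  by apply: ltnW; rewrite ltnNge -ltnS hi.
have e (Q : pred 'I_n) :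
    \sum_(i | Q i) y i = \sum_(i | Q i) (y i - t) + t * \sum_(i | Q i) 1.
  rewrite sumrB mulr_sumr.
  by under [X in _ = _ - _ + X]eq_bigr do rewrite mulr1; rewrite subrK.
rewrite e [X in _ <= X]e h1 lerD2r.
apply: sum_split_le => i /andP[hA hB].
  by have := ht i; rewrite (negbTE hB) subr_le0.
by have := ht i; rewrite hA subr_ge0.
Qed.

Lemma topsum_ge (x : 'cV[R]_n) (t : 'S_n) j : (j <= n)%N ->
  \sum_(i < n | (i < j)%N) x (t i) 0 <= topsum x j.
Proof.
move=> hj.
have [s hs] := sort_perm (fun i => x i 0).
rewrite (topsum_sorted hs hj).
pose rho := (t * s^-1)%g.
have hr i : s (rho i) = t i by rewrite /rho permM permKV.
have E (F : 'I_n -> R) : \sum_(i < n | (i < j)%N) F (s (rho i)) =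
    \sum_(k < n | ((rho^-1)%g k < j)%N) F (s k).
  rewrite [RHS](reindex_inj (@perm_inj _ rho)) /=.
  by apply: eq_bigl => i; rewrite permK.
have -> : \sum_(i < n | (i < j)%N) x (t i) 0 =
   \sum_(i < n | (i < j)%N) x (s (rho i)) 0 by apply: eq_bigr => i _; rewrite hr.
rewrite (E (fun k => x k 0)); apply: (core (y := fun k => x (s k) 0)) => //.
by rewrite -(E (fun _ => 1)).
Qed.

End Vec.
Section Rado.
Variable R : realFieldType.
Variable n : nat.

Definition prefix (v : 'cV[R]_n) m := \sum_(i < n | (i < m)%N) v i 0.
Definition perms (v : 'cV[R]_n) : 'cV[R]_n -> Prop := fun y => exists s : 'S_n, y = pv s v.

Lemma exmin (P : pred 'I_n) : (exists i, P i) ->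
  exists j, P j /\ forall i, P i -> (j <= i)%N.
Proof.
move=> [i0 h0]; case: (arg_minnP (fun i : 'I_n => val i) h0) => j hj hm.
by exists j.
Qed.

Lemma prefixS (v : 'cV[R]_n) (j : 'I_n) : prefix v j.+1 = prefix v j + v j 0.
Proof.
rewrite /prefix (bigD1 j) /= ?ltnSn // addrC; congr (_ + _).
by apply: eq_bigl => i; rewrite ltnS [in RHS]ltn_neqAle andbC.
Qed.

Lemma prefixn (v : 'cV[R]_n) : prefix v n = \sum_i v i 0.
Proof. by apply: eq_bigl => i; rewrite ltn_ord. Qed.

Lemma sum_if (P : pred 'I_n) (k : 'I_n) (c : R) :
  \sum_(i | P i) (if i == k then c else 0) = if P k then c else 0.
Proof.
case hk: (P k).
  rewrite (bigD1 k) //= eqxx big1 ?addr0 // => i /andP[_ /negbTE ->] //.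
apply: big1 => i hi; case: eqP => // e; by rewrite e hk in hi.
Qed.

Lemma perms_self (v : 'cV[R]_n) : perms v v.
Proof. by exists 1%g; rewrite pv1. Qed.

Lemma rado_ind (x : 'cV[R]_n) : (forall i j : 'I_n, (i <= j)%N -> x j 0 <= x i 0) ->
  forall N (v : 'cV[R]_n), leq #|[set i | v i 0 != x i 0]| N ->
  (forall m, (m <= n)%N -> prefix x m <= prefix v m) ->
  \sum_i x i 0 = \sum_i v i 0 ->
  conv (perms v) x.
Proof.
move=> hx; elim=> [|N IH] v hc hp hs.
  have -> : x = v.
    apply/matrixP => i c; rewrite ord1; apply/eqP; apply: contraT => hne.
    move: hc; rewrite leqn0 cards_eq0 => /eqP hE.
    have : i \in [set i | v i 0 != x i 0] by rewrite inE eq_sym.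
    by rewrite hE inE.
  exact/conv1/perms_self.
case: (boolP ([set i | v i 0 != x i 0] == set0)) => [/eqP hE|hne].
  have -> : x = v.
    apply/matrixP => i c; rewrite ord1; apply/eqP; apply: contraT => hne.
    have : i \in [set i | v i 0 != x i 0] by rewrite inE eq_sym.
    by rewrite hE inE.
  exact/conv1/perms_self.
set M := [set i | v i 0 != x i 0] in hc hne.
have [j [hjM hjmin]] : exists j, j \in M /\ forall i, i \in M -> (j <= i)%N.
  by apply: exmin; case/set0Pn: hne => i hi; exists i.
have hlt (i : 'I_n) : (i < j)%N -> v i 0 = x i 0.
  move=> hij; apply/eqP; apply: contraT => hne'.
  have : (j <= i)%N by apply: hjmin; rewrite inE.
  by rewrite leqNgt hij.
have hpj : prefix x j = prefix v j.
  by apply: eq_bigr => i hi; rewrite hlt.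
have hvj : x j 0 < v j 0.
  have := hp j.+1 (ltn_ord j); rewrite !prefixS hpj lerD2l => hle.
  by rewrite lt_neqAle hle andbT; move: hjM; rewrite inE eq_sym.
have [k [hkM hkmin]] : exists k, v k 0 < x k 0 /\ forall i, v i 0 < x i 0 -> (k <= i)%N.
  apply: (exmin (P := fun i => v i 0 < x i 0)).
  apply/not_all_not_ex => hall.
  have hge i : 0 <= v i 0 - x i 0.
    by rewrite subr_ge0 leNgt; apply/negP => h; apply: (hall i).
  have hz : \sum_i (v i 0 - x i 0) = 0 by rewrite sumrB hs subrr.
  have := @psumr_eq0P _ _ xpredT (fun i => v i 0 - x i 0) (fun i _ => hge i) hz j isT.
  by move/eqP; rewrite subr_eq0 => /eqP e; move: hvj; rewrite e ltxx.
have hbk (i : 'I_n) : (i < k)%N -> x i 0 <= v i 0.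
  move=> hik; rewrite leNgt; apply/negP => h.
  by have := hkmin i h; rewrite leqNgt hik.
have hjk : (j < k)%N.
  case: (ltngtP j k) => // [hkj' | e].
    by have := hlt k hkj'; move: hkM => /[swap] ->; rewrite ltxx.
  have ekj : k = j by apply: val_inj.
  by move: hkM; rewrite ekj ltNge (ltW hvj).
have jk : j != k by rewrite neq_ltn hjk.
have hxjk : x k 0 <= x j 0 by apply: hx; apply: ltnW.
have dpos : 0 < v j 0 - v k 0.
  by rewrite subr_gt0 (lt_le_trans hkM) // (le_trans hxjk) // ltW.
pose d := if v j 0 - x j 0 <= x k 0 - v k 0 then v j 0 - x j 0 else x k 0 - v k 0.
have d1 : d <= v j 0 - x j 0 by rewrite /d; case: ifP => // /negbT; rewrite -ltNge => /ltW.
have d2 : d <= x k 0 - v k 0 by rewrite /d; case: ifP.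
have d0 : 0 < d by rewrite /d; case: ifP; rewrite subr_gt0.
have ddv : d <= v j 0 - v k 0.
  by rewrite (le_trans d1) // lerD2l lerN2 (le_trans (ltW hkM)).
pose v' : 'cV[R]_n := \col_i (v i 0 + (if i == k then d else 0) - (if i == j then d else 0)).
have v'E i : v' i 0 = v i 0 + (if i == k then d else 0) - (if i == j then d else 0).
  by rewrite mxE.
have hpre m : prefix v' m =
    prefix v m + (if (k < m)%N then d else 0) - (if (j < m)%N then d else 0).
  rewrite /prefix; under eq_bigr do rewrite v'E.
  by rewrite sumrB big_split /= !(sum_if (fun i : 'I_n => (i < m)%N)).
pose t := 1 - d / (v j 0 - v k 0).
have hv' : v' = t *: v + (1 - t) *: pv (tperm j k) v.
  apply/matrixP => i c; rewrite ord1 v'E mxE [(t *: v) i 0]mxE [(_ *: pv _ _) i 0]mxE pvE /t.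
  have dn : v j 0 - v k 0 != 0 by rewrite gt_eqF.
  case: (eqVneq i j) => [->|hij].
    by rewrite tpermL (negbTE jk); field.
  case: (eqVneq i k) => [->|hik].
    by rewrite tpermR ?(negbTE hij) ?eqxx; field.
  by rewrite tpermD 1?eq_sym // ?(negbTE hik) ?(negbTE hij); ring.
have ht0 : 0 <= t by rewrite /t subr_ge0 ler_pdivrMr // mul1r.
have ht1 : t <= 1 by rewrite /t lerBlDr lerDl divr_ge0 // ltW.
apply: conv_conv.
apply: (conv_mono (S := perms v')).
  move=> y [s ->]; rewrite hv' pvD !pvZ pvM.
  by apply: conv2 => //; [exists s | exists (s * tperm j k)%g].
apply: IH.
- have hsub i : v' i 0 != x i 0 -> i \in M.
    rewrite v'E inE; case: (eqVneq i k) => [->|hik]; first by rewrite (lt_eqF hkM).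
    case: (eqVneq i j) => [->|hij]; first by rewrite (gt_eqF hvj).
    by rewrite addr0 subr0.
  have hl : exists2 l, l \in M & v' l 0 = x l 0.
    case: (boolP (v j 0 - x j 0 <= x k 0 - v k 0)) => hdd.
      exists j => //; rewrite v'E eqxx (negbTE jk) /d hdd addr0; ring.
    exists k; first by rewrite inE lt_eqF.
    rewrite v'E eqxx eq_sym (negbTE jk) /d (negbTE hdd) subr0; ring.
  case: hl => l hlM hl.
  have : leq #|[set i | v' i 0 != x i 0]| #|M :\ l|.
    apply: subset_leq_card; apply/subsetP => i; rewrite inE => hi.
    rewrite in_setD1 hsub // andbT; apply: contraNneq hi => ->; rewrite hl.
    by rewrite eqxx.
  by move: hc; rewrite (cardsD1 l) hlM add1n ltnS => /[swap]; apply: leq_trans.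
- move=> mm hm; rewrite hpre.
  case: (ltnP k mm) => hkm.
    by rewrite ifT ?(ltn_trans hjk) // addrK hp.
  case: (ltnP j mm) => hjm; last by rewrite subr0 addr0 hp.
  rewrite addr0 lerBrDr -lerBrDl.
  have -> : prefix v mm - prefix x mm = \sum_(i < n | (i < mm)%N) (v i 0 - x i 0).
    by rewrite sumrB.
  rewrite (bigD1 j) //= -[d]addr0 lerD // sumr_ge0 // => i /andP[him _].
  by rewrite subr_ge0 hbk // (leq_trans him).
- rewrite hs -(prefixn v) -(prefixn v') hpre ifT // ifT ?(ltn_trans hjk) //.
  by rewrite addrK.
Qed.

Lemma rado (u x : 'cV[R]_n) : nonincreasing_vec u -> majorizes u x ->
  conv (perms u) x.
Proof.
move=> hu [hm1 hm2].
have [s hs] := sort_perm (fun i => x i 0).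
pose xs := pv s x.
have hxs (i j : 'I_n) : (i <= j)%N -> xs j 0 <= xs i 0 by move=> hij; rewrite !pvE hs.
have hu1 : forall i j : 'I_n, (i <= j)%N -> u ((1%g : 'S_n) j) 0 <= u ((1%g : 'S_n) i) 0.
  by move=> i j hij; rewrite !perm1 hu.
have tu m : (m <= n)%N -> topsum u m = prefix u m.
  move=> hm; rewrite (topsum_sorted hu1 hm); apply: eq_bigr => i _; by rewrite perm1.
have tx m : (m <= n)%N -> topsum x m = prefix xs m.
  move=> hm; rewrite (topsum_sorted hs hm); apply: eq_bigr => i _; by rewrite pvE.
have hc : conv (perms u) xs.
  apply: (rado_ind hxs (N := n)).
  - by apply: (leq_trans (max_card _)); rewrite card_ord leqnn.
  - move=> m hm; rewrite -tu // -tx //.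
    case: (ltnP m n) => hmn; first exact: hm1.
    have -> : m = n by apply/eqP; rewrite eqn_leq hm hmn.
    by rewrite hm2.
  - by rewrite -!prefixn -tu // -tx // hm2.
have -> : x = pv (s^-1)%g xs by rewrite /xs pvM mulVg pv1.
apply: (conv_lin (f := pv (s^-1)%g) (S := perms u)) => //.
- by move=> p q; rewrite pvD.
- by move=> c p; rewrite pvZ.
- by move=> y [r ->]; rewrite pvM; exists (s^-1 * r)%g.
Qed.

End Rado.
Section Faces.
Variable R : realFieldType.
Variable n : nat.

Definition pb (P : Prop) : bool := if excluded_middle_informative P then true else false.
Lemma pbP (P : Prop) : reflect P (pb P).
Proof. by rewrite /pb; case: excluded_middle_informative => h; constructor. Qed.

Lemma card_lt m : (m <= n)%N -> #|[set i : 'I_n | (i < m)%N]| = m.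
Proof.
move=> hm; rewrite -sum1_card (eq_bigl (fun i : 'I_n => (i < m)%N)) => [|i]; last by rewrite inE.
rewrite -(big_ord_widen n (fun _ => 1%N) hm).
by rewrite big_const_ord iter_addn_0 mul1n.
Qed.

Lemma prefix_set (S : {set 'I_n}) :
  (forall i j : 'I_n, (i <= j)%N -> j \in S -> i \in S) ->
  forall j : 'I_n, (j \in S) = (j < #|S|)%N.
Proof.
move=> hS j; apply/idP/idP => hj.
  have : leq #|[set i : 'I_n | (i < j.+1)%N]| #|S|.
    apply: subset_leq_card; apply/subsetP => i; rewrite inE ltnS => hij.
    exact: hS hij hj.
  by rewrite card_lt.
apply: contraTT hj => hj; rewrite -leqNgt.
have : leq #|S| #|[set i : 'I_n | (i < j)%N]|.
  apply: subset_leq_card; apply/subsetP => i hi; rewrite inE ltnNge.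
  by apply: contraNN hj => hji; apply: hS hji hi.
by rewrite card_lt // ltnW.
Qed.

Lemma sort_face (a b : R) (F : 'cV[R]_n -> Prop) (x0 : 'cV[R]_n) :
  a < b -> box a b x0 -> F x0 ->
  exists s : 'S_n, (forall i j : 'I_n, (i <= j)%N -> x0 (s j) 0 <= x0 (s i) 0) /\
    forall G : 'cV[R]_n -> Prop,
      (forall y, G y <-> exists x, F x /\ y = perm_mx s *m x) -> in_I a b G.
Proof.
move=> ab hb hF.
have disj i : uset b F i -> lset a F i -> False.
  by move=> hu hl; have := hu _ hF; rewrite (hl _ hF) => e; move: ab; rewrite e ltxx.
pose cls i : nat := if pb (uset b F i) then 2 else if pb (lset a F i) then 0 else 1.
have cls2 i : (cls i == 2)%N = pb (uset b F i).
  by rewrite /cls; case: (pbP (uset b F i)) => //; case: (pbP (lset a F i)).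
have cls0 i : (cls i == 0)%N = pb (lset a F i).
  rewrite /cls; case: (pbP (uset b F i)) => hu; case: (pbP (lset a F i)) => hl //.
  by case: (disj _ hu hl).
have clsle i : (cls i <= 2)%N by rewrite /cls; case: pb => //; case: pb.
pose D := b - a + 1.
have D0 : 0 <= D by rewrite /D; lra.
pose key i := x0 i 0 + (cls i)%:R * D.
have [s hs] := sort_perm key.
have hbx i : a <= x0 i 0 <= b by apply: hb.
have hcl (i j : 'I_n) : (i <= j)%N -> (cls (s j) <= cls (s i))%N.
  move=> hij; rewrite leqNgt; apply/negP => hlt.
  have h1 : ((cls (s i))%:R + 1) * D <= (cls (s j))%:R * D.
    by apply: ler_wpM2r => //; rewrite natr1 ler_nat.
  have := hs _ _ hij; rewrite /key.
  move: (hbx (s i)) (hbx (s j)) => /andP[a1 b1] /andP[a2 b2].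
  rewrite /D in h1 *; nra.
have hval (i j : 'I_n) : (i <= j)%N -> x0 (s j) 0 <= x0 (s i) 0.
  move=> hij; have hc := hcl _ _ hij.
  case: (ltngtP (cls (s j)) (cls (s i))) => [hlt|hgt|heq]; last first.
  - by have := hs _ _ hij; rewrite /key heq lerD2r.
  - by move: hc; rewrite leqNgt hgt.
  move: (hbx (s i)) (hbx (s j)) => /andP[a1 b1] /andP[a2 b2].
  case e2: (cls (s i) == 2)%N.
    by move: e2; rewrite cls2 => /pbP hu; rewrite (hu _ hF).
  have e0 : (cls (s j) == 0)%N.
    by move: hlt (clsle (s i)) e2; case: (cls (s i)) => [|[|[|]]] //; case: (cls (s j)).
  by move: e0; rewrite cls0 => /pbP hl; rewrite (hl _ hF).
exists s; split => // G hG.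
pose U := [set i : 'I_n | cls i == 2]%N.
pose L := [set i : 'I_n | cls i == 0]%N.
pose SU := [set j : 'I_n | cls (s j) == 2]%N.
pose SL := [set j : 'I_n | cls (s j) != 0]%N.
have cSU : #|SU| = #|U|.
  rewrite -(card_preimset U (@perm_inj _ s)); apply: eq_card => j; by rewrite !inE.
have cSL : #|SL| = (n - #|L|)%N.
  have : (#|L| + #|~: L| = n)%N by rewrite cardsC card_ord.
  have -> : #|~: L| = #|SL|.
    rewrite -(card_preimset (~: L) (@perm_inj _ s)); apply: eq_card => j; by rewrite !inE.
  lia.
have pSU := prefix_set (S := SU).
have pSL := prefix_set (S := SL).
have hUL : (#|U| + #|L| <= n)%N.
  have e : U :&: L = set0.
    apply/setP => i; rewrite !inE; case: (cls i) => [|[|[|]]] //.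
  have := cardsU U L; rewrite e cards0 subn0 => <-.
  by rewrite -[n in (_ <= n)%N]card_ord max_card.
have hGu (j : 'I_n) : uset b G j <-> uset b F (s j).
  split => h.
    move=> x hx; have := h (perm_mx s *m x); rewrite -/(pv s x) pvE; apply.
    by apply/hG; exists x.
  move=> y /hG [x [hx ->]]; rewrite -/(pv s x) pvE; exact: h.
have hGl (j : 'I_n) : lset a G j <-> lset a F (s j).
  split => h.
    move=> x hx; have := h (perm_mx s *m x); rewrite -/(pv s x) pvE; apply.
    by apply/hG; exists x.
  move=> y /hG [x [hx ->]]; rewrite -/(pv s x) pvE; exact: h.
exists #|U|, (n - #|L|).+1; split; [|split; [|split]].
- lia.
- have : (#|L| <= n)%N by rewrite -[n in (_ <= n)%N]card_ord max_card.
  lia.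
- move=> j; rewrite hGu -cSU -pSU.
    by rewrite inE cls2; split => [/pbP|/pbP].
  by move=> i k hik; rewrite !inE => /eqP hk; move: (hcl _ _ hik); rewrite hk (eqn_leq _ 2) clsle.
- move=> j; rewrite hGl ltnS -cSL.
  have hj : (j < #|SL|)%N = ~~ pb (lset a F (s j)).
    rewrite -pSL; first by rewrite inE cls0.
    move=> i k hik; rewrite !inE; apply: contraNN => /eqP hi.
    by move: (hcl _ _ hik); rewrite hi leqn0.
  by rewrite leqNgt hj negbK; split => /pbP.
Qed.

End Faces.
Lemma fchoice (A B : Type) (P : A -> B -> Prop) :
  (forall a, exists b, P a b) -> exists f : A -> B, forall a, P a (f a).
Proof.
move=> h; exists (fun a => proj1_sig (constructive_indefinite_description _ (h a))).
by move=> a; exact: (proj2_sig (constructive_indefinite_description _ (h a))).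
Qed.

Lemma sum_pair (R : realFieldType) (V W : lmodType R) (I : finType) (F : I -> V * W) :
  \sum_i F i = (\sum_i (F i).1, \sum_i (F i).2).
Proof.
rewrite [LHS]surjective_pairing.
have hf : {morph (@fst V W) : p q / p + q >-> p + q} by [].
have hs : {morph (@snd V W) : p q / p + q >-> p + q} by [].
by rewrite (big_morph _ hf (erefl : (0 : V * W).1 = 0))
           (big_morph _ hs (erefl : (0 : V * W).2 = 0)).
Qed.

Lemma sum_pv (R : realFieldType) n (s : 'S_n) (v : 'cV[R]_n) :
  \sum_i pv s v i 0 = \sum_i v i 0.
Proof.
under eq_bigr do rewrite pvE.
by rewrite [RHS](reindex_inj (@perm_inj _ s)).
Qed.

Lemma topsum_n (R : realFieldType) n (y : 'cV[R]_n) : topsum y n = \sum_i y i 0.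
Proof.
have [s hs] := sort_perm (fun i => y i 0).
rewrite (topsum_sorted hs (leqnn n)) (eq_bigl xpredT) => [|i]; last by rewrite ltn_ord.
by rewrite -(sum_pv s); apply: eq_bigr => i _; rewrite pvE.
Qed.

Lemma box_pv (R : realFieldType) n (a b : R) s (v : 'cV[R]_n) :
  box a b v -> box a b (pv s v).
Proof. by move=> h j; rewrite pvE. Qed.

Unset Implicit Arguments.
Set Strict Implicit.

Theorem mainTheorem15 (R : realFieldType) (n m : nat) (a b : R)
    (Z : 'cV[R]_n * 'cV[R]_m -> Prop) (r : nat)
    (Fs : 'I_r -> ('cV[R]_n -> Prop)) :
  a < b ->
  perm_inv_Z Z ->
  (forall i, is_face a b (Fs i)) ->
  perm_inv_faces Fs ->
  forall (x : 'cV[R]_n) (z : 'cV[R]_m),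
    conv (Xset Z a b Fs) (x, z) <->
    exists u : 'cV[R]_n,
      [/\ conv (fun p => exists i : 'I_r,
                   in_I a b (Fs i) /\ Xset Z a b (fun _ : 'I_1 => Fs i) p)
               (u, z),
          nonincreasing_vec u &
          majorizes u x].
Proof.
move=> ab hZ _ hF x z; split.
- move=> [K [lam [P [h0 h1 hX heq]]]].
  have hch : forall k : 'I_K, exists s : 'S_n,
      (forall i j : 'I_n, (i <= j)%N -> (P k).1 (s j) 0 <= (P k).1 (s i) 0) /\
      exists i, in_I a b (Fs i) /\ Fs i (pv s (P k).1).
    move=> k; have [hb hz [i0 hi0]] := hX k.
    have [s [hs hG]] := sort_face ab hb hi0.
    have [j hj] := hF i0 (perm_mx s) (perm_mx_is_perm _ _).
    exists s; split => //; exists j; split; first exact: hG.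
    by apply/hj; exists (P k).1.
  have [sf hsf] := fchoice hch.
  pose xk k := (P k).1; pose zk k := (P k).2; pose uk k := pv (sf k) (xk k).
  pose u := \sum_k lam k *: uk k.
  have [ex ez] : x = \sum_k lam k *: xk k /\ z = \sum_k lam k *: zk k.
    by move: heq; rewrite sum_pair => -[-> ->].
  have xE i : x i 0 = \sum_k lam k * xk k i 0.
    by rewrite ex summxE; apply: eq_bigr => k _; rewrite mxE.
  have uE i : u i 0 = \sum_k lam k * uk k i 0.
    by rewrite /u summxE; apply: eq_bigr => k _; rewrite mxE.
  have hu : nonincreasing_vec u.
    move=> i j hij; rewrite !uE; apply: ler_sum => k _; apply: ler_wpM2l => //.
    by rewrite /uk !pvE; case: (hsf k) => hs _; apply: hs.
  exists u; split => //.
  + exists K, lam, (fun k => (uk k, zk k)); split => //.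
    * move=> k; case: (hsf k) => _ [i [hi hFi]]; exists i; split => //.
      have [hb hz _] := hX k.
      split => //=.
      - exact: box_pv.
      - by apply: hZ; [exact: perm_mx_is_perm | rewrite -surjective_pairing].
      - by exists ord0.
    * by rewrite sum_pair /= {1}ez.
  + have hu1 : forall i j : 'I_n, (i <= j)%N ->
        u ((1%g : 'S_n) j) 0 <= u ((1%g : 'S_n) i) 0.
      by move=> i j hij; rewrite !perm1 hu.
    have [sx hsx] := sort_perm (fun i => x i 0).
    split.
    * move=> j hj; have hjn := ltnW hj.
      rewrite (topsum_sorted hsx hjn) (topsum_sorted hu1 hjn).
      under eq_bigr do rewrite xE.
      have -> : \sum_(i < n | (i < j)%N) u ((1%g : 'S_n) i) 0 =
          \sum_(i < n | (i < j)%N) \sum_k lam k * uk k i 0.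
        by apply: eq_bigr => i _; rewrite perm1 uE.
      rewrite exchange_big [X in _ <= X]exchange_big /=.
      apply: ler_sum => k _; rewrite -!mulr_sumr; apply: ler_wpM2l => //.
      apply: (le_trans (topsum_ge (xk k) sx hjn)).
      case: (hsf k) => hs _.
      rewrite (topsum_sorted hs hjn) (eq_bigr (fun i => uk k i 0)) // => i _.
      by rewrite /uk pvE.
    * rewrite !topsum_n.
      have -> : \sum_i u i 0 = \sum_i \sum_k lam k * uk k i 0.
        by apply: eq_bigr => i _; rewrite uE.
      have -> : \sum_i x i 0 = \sum_i \sum_k lam k * xk k i 0.
        by apply: eq_bigr => i _; rewrite xE.
      rewrite exchange_big [RHS]exchange_big /=.
      apply: eq_bigr => k _; rewrite -!mulr_sumr /uk sum_pv //.
- move=> [u [hc hu hmaj]].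
  have hr := rado hu hmaj.
  apply: conv_conv.
  apply: (conv_mono (S := fun q => exists s : 'S_n, q = (pv s u, z))).
    move=> q [s ->].
    have := conv_lin (f := fun p : 'cV[R]_n * 'cV[R]_m => (pv s p.1, p.2))
                     (T := Xset Z a b Fs) _ _ _ hc.
    apply.
    + by move=> p q'; rewrite /= pvD.
    + by move=> c p; rewrite /= pvZ.
    + move=> p [i [hi [hb hz [_ hFi]]]]; split => /=.
      * exact: box_pv.
      * by apply: hZ; [exact: perm_mx_is_perm | rewrite -surjective_pairing].
      * have [j hj] := hF i (perm_mx s) (perm_mx_is_perm _ _).
        by exists j; apply/hj; exists p.1.
  move: hr => [k [mu [ys [h0 h1 hy ->]]]].
  exists k, mu, (fun i => (ys i, z)); split => //.
  - by move=> i; have [s ->] := hy i; exists s.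
  - rewrite sum_pair /=; congr pair.
    by rewrite -scaler_suml h1 scale1r.
Qed.
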